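(* Let $f \in \Bbbk[t] \setminus \Bbbk$. Then $L(f) = \mathbb{W}_1 \cap \mathbb{W}[f]$, where the intersection is taken inside $\Bbbk(t)\partial$.
   Context: $\Bbbk$ is a field of characteristic zero. $\mathbb{W}_1 = \mathrm{Der}(\Bbbk[t]) = \Bbbk[t]\partial$ with $\partial = d/dt$ and bracket $[f\partial, g\partial] = (fg'-f'g)\partial$; it is viewed as a Lie subalgebra of $\Bbbk(t)\partial$. For $f,g \in \Bbbk[t]\setminus\{0\}$ with $f'g \in \Bbbk[f]$, write $L(f,g) = \Bbbk[f]\,g\partial$ (a Lie subalgebra of $\mathbb{W}_1$). Let $g_f$ be the unique monic polynomial of minimal degree with $f'g_f \in \Bbbk[f]$, and put $L(f) = L(f,g_f)$. $\mathbb{W}[f] = \mathrm{Der}(\Bbbk[f]) = \Bbbk[f]\partial_f$, identified with the subalgebra $\frac{1}{f'}\Bbbk[f]\partial$ of $\Bbbk(t)\partial$ (i.e. $\partial_f = \frac{1}{f'}\partial$). *)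

(* Defs.v *)
From HB Require Import structures.
From mathcomp Require Import all_boot all_order all_algebra.
From mathcomp Require Import fraction.
Set Implicit Arguments. Unset Strict Implicit. Unset Printing Implicit Defensive.
Import GRing.Theory.
Local Open Scope ring_scope.

Notation "x %:F" := (@FracField.tofrac _ x).

(* A vector field  r \partial  in  k(t)\partial  is identified with its
   coefficient r in the field of rational functions k(t) = {fraction {poly F}}. *)

Definition inKf (F : fieldType) (f p : {poly F}) : Prop :=
  exists h : {poly F}, p = h \Po f.

Definition is_gf (F : fieldType) (f g : {poly F}) : Prop :=
  [/\ g \is monic, inKf f (f^`() * g) &
      forall h : {poly F}, h \is monic -> inKf f (f^`() * h) -> (size g <= size h)%N].

Definition W1 (F : fieldType) (r : {fraction {poly F}}) : Prop :=
  exists q : {poly F}, r = q%:F.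

(* W[f] = k[f]\partial_f = (1/f') k[f] \partial *)
Definition Wf (F : fieldType) (f : {poly F}) (r : {fraction {poly F}}) : Prop :=
  exists h : {poly F}, r = (h \Po f)%:F / (f^`())%:F.

Definition Lfg (F : fieldType) (f g : {poly F}) (r : {fraction {poly F}}) : Prop :=
  exists p : {poly F}, r = ((p \Po f) * g)%:F.

(* Main.v *)
Require Import Defs.
From HB Require Import structures.
From mathcomp Require Import all_boot all_order all_algebra.
From mathcomp Require Import fraction.
From mathcomp Require Import zify.
Local Open Scope ring_scope.
Import GRing.Theory.

Lemma size_sub_lt (F : fieldType) (p q : {poly F}) :
  size p = size q -> lead_coef p = lead_coef q -> p != 0 -> (size (p - q)%R < size p)%N.
Proof.
move=> Hs Hl p0.
have sp : (0 < size p)%N by rewrite size_poly_gt0.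
have -> : size p = (size p).-1.+1 by rewrite prednK.
rewrite ltnS; apply/leq_sizeP => j Hj; rewrite coefB.
rewrite leq_eqVlt in Hj; case/orP: Hj => [/eqP <-|Hlt].
- by move: Hl; rewrite !lead_coefE -Hs => ->; rewrite subrr.
- have Hj : (size p <= j)%N by move: Hlt; case: (size p) sp.
  by rewrite !nth_default // ?subrr // -Hs.
Qed.

Lemma size_deriv0 (F : fieldType) (charF0 : [pchar F] =i pred0) (f : {poly F}) :
  (1 < size f)%N -> size f^`() = (size f).-1.
Proof.
move=> f1; apply/eqP; rewrite eqn_leq; apply/andP; split.
  have := lt_size_deriv (p:=f); rewrite -size_poly_gt0 ltnW //.
  by move=> /(_ isT); case: (size f) f1.
have Hc : f^`()`_(size f).-2 != 0.
  rewrite coef_deriv -mulr_natr mulf_eq0 negb_or ((pcharf0P _).1 charF0) /=.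
  have -> : (size f).-2.+1 = (size f).-1 by case: (size f) f1 => [|[]].
  rewrite -lead_coefE lead_coef_eq0 -size_poly_gt0 ltnW //=; by case: (size f) f1 => [|[]].
rewrite leqNgt; apply/negP => H; move: Hc; rewrite nth_default ?eqxx //.
by move: H; case: (size f) f1 => [|[]].
Qed.

Lemma deriv_neq0 (F : fieldType) (charF0 : [pchar F] =i pred0) (f : {poly F}) :
  (1 < size f)%N -> f^`() != 0.
Proof. by move=> f1; rewrite -size_poly_gt0 size_deriv0 //; case: (size f) f1 => [|[]]. Qed.

Lemma size_rel (F : fieldType) (charF0 : [pchar F] =i pred0) (f q h : {poly F}) :
  (1 < size f)%N -> q != 0 -> f^`() * q = h \Po f ->
  ((size f).-1 + size q).-2 = ((size h).-1 * (size f).-1)%N.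
Proof.
move=> f1 q0 E.
by rewrite -size_comp_poly -E size_mul ?deriv_neq0 // size_deriv0.
Qed.

Lemma comp_polyXn' (F : fieldType) (m : nat) (f : {poly F}) : 'X^m \Po f = f ^+ m.
Proof. by rewrite -[f]comp_polyX; rewrite rmorphXn /= !comp_polyX. Qed.

Lemma key (F : fieldType) (charF0 : [pchar F] =i pred0)
  (f : {poly F}) (f1 : (1 < size f)%N)
  (gf : {poly F}) (Hgf : is_gf f gf) :
  forall q, inKf f (f^`() * q) -> exists p, q = (p \Po f) * gf.
Proof.
case: Hgf => gmon [k Ek] gmin.
have g0 : gf != 0 by apply: monic_neq0.
have n0 : (0 < (size f).-1)%N by case: (size f) f1 => [|[]].
have lf0 : lead_coef f != 0 by rewrite lead_coef_eq0 -size_poly_gt0 ltnW.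
move=> q; elim: (size q).+1 {-2}q (ltnSn (size q)) => // N IH {}q Hq [h Eh].
have [->|q0] := eqVneq q 0; first by exists 0; rewrite comp_poly0 mul0r.
have lq0 : lead_coef q != 0 by rewrite lead_coef_eq0.
case: (ltnP (size q) (size gf)) => Hsz.
  exfalso.
  have H1 : (lead_coef q)^-1 *: q \is monic.
    by apply/monicP; rewrite lead_coefZ mulVf.
  have H2 : inKf f (f^`() * ((lead_coef q)^-1 *: q)).
    by exists ((lead_coef q)^-1 *: h); rewrite comp_polyZ -Eh scalerAr.
  by move: (gmin _ H1 H2); rewrite size_scale ?invr_eq0 // leqNgt Hsz.
have Rq := @size_rel F charF0 _ _ _ f1 q0 Eh.
have Rg := @size_rel F charF0 _ _ _ f1 g0 Ek.
set n := (size f).-1 in n0 Rq Rg.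
set m := ((size h).-1 - (size k).-1)%N.
have sq : size q = (m * n + size gf)%N.
  have sg1 : (0 < size gf)%N by rewrite size_poly_gt0.
  have sq1 : (0 < size q)%N by rewrite size_poly_gt0.
  rewrite /m mulnBl -Rq -Rg. lia.
set c := lead_coef q / lead_coef f ^+ m.
set r := c *: f ^+ m * gf.
have fm0 : f ^+ m != 0 by rewrite expf_neq0 // -size_poly_gt0 ltnW.
have c0 : c != 0 by rewrite mulf_neq0 // invr_eq0 expf_neq0.
have sr : size r = size q.
  rewrite /r -scalerAl size_scale // size_mul //.
  have := size_exp f m; rewrite -/n => E.
  have : (0 < size (f ^+ m))%N by rewrite size_poly_gt0.
  rewrite sq; move: E; case: (size (f ^+ m)) => //= s -> _.
  have sg1 : (0 < size gf)%N by rewrite size_poly_gt0.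
  by rewrite mulnC.
have lr : lead_coef r = lead_coef q.
  rewrite /r -scalerAl lead_coefZ lead_coefM lead_coef_exp (monicP gmon) mulr1.
  by rewrite /c mulfVK // expf_neq0.
have [p2 Ep2] : exists p2, q - r = (p2 \Po f) * gf.
  apply: (IH (q - r)).
    have := @size_sub_lt F _ _ (esym sr) (esym lr) q0. move=> H.
    by apply: leq_trans H _; rewrite -ltnS.
  exists (h - c *: 'X^m * k).
  rewrite mulrBr Eh comp_polyB comp_polyM comp_polyZ comp_polyXn' -Ek /r.
  by congr (_ - _); rewrite mulrCA.
exists (p2 + c *: 'X^m).
by rewrite comp_polyD mulrDl -Ep2 comp_polyZ comp_polyXn' /r -scalerAl subrK.
Qed.

Theorem mainTheorem1 (F : fieldType) (charF0 : [pchar F] =i pred0)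
  (f : {poly F}) (f_nonconst : (1 < size f)%N)
  (gf : {poly F}) (Hgf : is_gf f gf) :
  forall r : {fraction {poly F}}, Lfg f gf r <-> (W1 r /\ Wf f r).
Proof.
have d0 : f^`() != 0 := @deriv_neq0 F charF0 f f_nonconst.
have d0F : (f^`())%:F != 0 by rewrite tofrac_eq0.
move=> r; split.
  case=> p ->; split; first by exists ((p \Po f) * gf).
  case: Hgf => _ [k Ek] _.
  exists (p * k); rewrite comp_polyM -Ek !tofracM.
  by rewrite [_%:F * (_ * _)]mulrCA [X in _ = X]mulrC mulKf.
case=> [[q ->]] [h Eh].
have E : f^`() * q = h \Po f.
  apply/eqP; rewrite -tofrac_eq tofracM Eh mulrC mulfVK //.
have [p Ep] := @key F charF0 f f_nonconst gf Hgf q (ex_intro _ h E).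
by exists p; rewrite Ep.
Qed.
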